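(* For every $p\in\Delta_7$ (not necessarily strictly positive), $p\in\mathcal{M}_{3,3}$ if and only if there exists $i\in\{1,2,3\}$ such that either $d_{i,0}(p)\ge0$ and $d_{i,1}(p)\ge0$, or $d_{i,0}(p)\le0$ and $d_{i,1}(p)\le0$.
   Context: A distribution of three binary random variables is a $2\times2\times2$ tensor $p=(p_{ijk})_{i,j,k\in\{0,1\}}$ with nonnegative entries summing to $1$; the set of these is the simplex $\Delta_7$. For $a,b,c\in\mathbb{R}^2_{\ge0}$, $a\otimes b\otimes c$ is the tensor with entries $a_ib_jc_k$. $\mathcal{M}_{3,3}$ is the set of $p\in\Delta_7$ that are a sum of three tensors of the form $a\otimes b\otimes c$ with $a,b,c\in\mathbb{R}^2_{\ge0}$. The slice determinants are $d_{1,0}=p_{000}p_{011}-p_{001}p_{010}$, $d_{1,1}=p_{100}p_{111}-p_{101}p_{110}$, $d_{2,0}=p_{000}p_{101}-p_{001}p_{100}$, $d_{2,1}=p_{010}p_{111}-p_{011}p_{110}$, $d_{3,0}=p_{000}p_{110}-p_{010}p_{100}$, $d_{3,1}=p_{001}p_{111}-p_{011}p_{101}$. *)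

(* Defs.v *)
From Stdlib Require Import Reals.
Open Scope R_scope.

(* A 2x2x2 tensor; index 0 is [false], index 1 is [true]. *)
Definition tensor3 := bool -> bool -> bool -> R.

Definition b2 (n : nat) : bool := Nat.eqb n 1.

Definition ent (p : tensor3) (i j k : nat) : R := p (b2 i) (b2 j) (b2 k).

Definition in_simplex (p : tensor3) : Prop :=
  (forall i j k, 0 <= p i j k) /\
  p false false false + p false false true + p false true false + p false true true +
  p true false false + p true false true + p true true false + p true true true = 1.

Definition nonneg2 (a : bool -> R) : Prop := 0 <= a false /\ 0 <= a true.

Definition outer3 (a b c : bool -> R) : tensor3 := fun i j k => a i * b j * c k.

Definition M33 (p : tensor3) : Prop :=
  in_simplex p /\
  exists a1 b1 c1 a2 b2' c2 a3 b3 c3 : bool -> R,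
    nonneg2 a1 /\ nonneg2 b1 /\ nonneg2 c1 /\
    nonneg2 a2 /\ nonneg2 b2' /\ nonneg2 c2 /\
    nonneg2 a3 /\ nonneg2 b3 /\ nonneg2 c3 /\
    forall i j k, p i j k = outer3 a1 b1 c1 i j k + outer3 a2 b2' c2 i j k
                            + outer3 a3 b3 c3 i j k.

Definition d10 (p : tensor3) := ent p 0 0 0 * ent p 0 1 1 - ent p 0 0 1 * ent p 0 1 0.
Definition d11 (p : tensor3) := ent p 1 0 0 * ent p 1 1 1 - ent p 1 0 1 * ent p 1 1 0.
Definition d20 (p : tensor3) := ent p 0 0 0 * ent p 1 0 1 - ent p 0 0 1 * ent p 1 0 0.
Definition d21 (p : tensor3) := ent p 0 1 0 * ent p 1 1 1 - ent p 0 1 1 * ent p 1 1 0.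
Definition d30 (p : tensor3) := ent p 0 0 0 * ent p 1 1 0 - ent p 0 1 0 * ent p 1 0 0.
Definition d31 (p : tensor3) := ent p 0 0 1 * ent p 1 1 1 - ent p 0 1 1 * ent p 1 0 1.

Definition dslice (i : nat) (e : bool) (p : tensor3) : R :=
  match i, e with
  | 1%nat, false => d10 p | 1%nat, true => d11 p
  | 2%nat, false => d20 p | 2%nat, true => d21 p
  | _, false => d30 p | _, true => d31 p
  end.

(* Main.v *)
Require Import Defs.
From Stdlib Require Import Reals Lra Lia Psatz.
Open Scope R_scope.

Definition det2 (u v : bool -> R) := u false * v true - u true * v false.
Definition mid (u v w : bool -> R) := exists l m, 0 <= l /\ 0 <= m /\ forall x, v x = l * u x + m * w x.
Definition G1 p := (0 <= d10 p /\ 0 <= d11 p) \/ (d10 p <= 0 /\ d11 p <= 0).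
Definition G2 p := (0 <= d20 p /\ 0 <= d21 p) \/ (d20 p <= 0 /\ d21 p <= 0).
Definition G3 p := (0 <= d30 p /\ 0 <= d31 p) \/ (d30 p <= 0 /\ d31 p <= 0).
Definition Dec (p : tensor3) A1 B1 C1 A2 B2 C2 A3 B3 C3 :=
  forall i j k, p i j k = outer3 A1 B1 C1 i j k + outer3 A2 B2 C2 i j k + outer3 A3 B3 C3 i j k.

Lemma sgn_pos K q0 q1 : 0 <= q0 -> 0 <= q1 ->
  (0 <= K*q0 /\ 0 <= K*q1) \/ (K*q0 <= 0 /\ K*q1 <= 0).
Proof. intros; destruct (Rle_lt_dec 0 K); [left|right]; split; nra. Qed.
Lemma sgn_neg K q0 q1 : q0 <= 0 -> q1 <= 0 ->
  (0 <= K*q0 /\ 0 <= K*q1) \/ (K*q0 <= 0 /\ K*q1 <= 0).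
Proof. intros; destruct (Rle_lt_dec 0 K); [right|left]; split; nra. Qed.

Lemma E12 p A1 B1 C1 A2 B2 C2 A3 B3 C3 : Dec p A1 B1 C1 A2 B2 C2 A3 B3 C3 ->
  mid A1 A2 A3 -> mid B1 B2 B3 -> nonneg2 C1 -> nonneg2 C2 -> nonneg2 C3 -> G3 p.
Proof.
  intros H [l [m [hl [hm Ha]]]] [l' [m' [hl' [hm' Hb]]]] [? ?] [? ?] [? ?].
  assert (e0: d30 p = det2 A1 A3 * det2 B1 B3 * (C1 false * C3 false + C2 false * (C1 false * m * m' + C3 false * l * l'))).
  { unfold d30, ent, b2, det2; simpl; rewrite !H; unfold outer3; rewrite !Ha, !Hb; ring. }
  assert (e1: d31 p = det2 A1 A3 * det2 B1 B3 * (C1 true * C3 true + C2 true * (C1 true * m * m' + C3 true * l * l'))).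
  { unfold d31, ent, b2, det2; simpl; rewrite !H; unfold outer3; rewrite !Ha, !Hb; ring. }
  unfold G3; rewrite e0, e1; apply sgn_pos;
  repeat (apply Rplus_le_le_0_compat || apply Rmult_le_pos); auto.
Qed.

Lemma E13 p A1 B1 C1 A2 B2 C2 A3 B3 C3 : Dec p A1 B1 C1 A2 B2 C2 A3 B3 C3 ->
  mid A1 A2 A3 -> mid C1 C2 C3 -> nonneg2 B1 -> nonneg2 B2 -> nonneg2 B3 -> G2 p.
Proof.
  intros H [l [m [hl [hm Ha]]]] [l' [m' [hl' [hm' Hb]]]] [? ?] [? ?] [? ?].
  assert (e0: d20 p = det2 A1 A3 * det2 C1 C3 * (B1 false * B3 false + B2 false * (B1 false * m * m' + B3 false * l * l'))).
  { unfold d20, ent, b2, det2; simpl; rewrite !H; unfold outer3; rewrite !Ha, !Hb; ring. }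
  assert (e1: d21 p = det2 A1 A3 * det2 C1 C3 * (B1 true * B3 true + B2 true * (B1 true * m * m' + B3 true * l * l'))).
  { unfold d21, ent, b2, det2; simpl; rewrite !H; unfold outer3; rewrite !Ha, !Hb; ring. }
  unfold G2; rewrite e0, e1; apply sgn_pos;
  repeat (apply Rplus_le_le_0_compat || apply Rmult_le_pos); auto.
Qed.

Lemma E23 p A1 B1 C1 A2 B2 C2 A3 B3 C3 : Dec p A1 B1 C1 A2 B2 C2 A3 B3 C3 ->
  mid B1 B2 B3 -> mid C1 C2 C3 -> nonneg2 A1 -> nonneg2 A2 -> nonneg2 A3 -> G1 p.
Proof.
  intros H [l [m [hl [hm Ha]]]] [l' [m' [hl' [hm' Hb]]]] [? ?] [? ?] [? ?].
  assert (e0: d10 p = det2 B1 B3 * det2 C1 C3 * (A1 false * A3 false + A2 false * (A1 false * m * m' + A3 false * l * l'))).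
  { unfold d10, ent, b2, det2; simpl; rewrite !H; unfold outer3; rewrite !Ha, !Hb; ring. }
  assert (e1: d11 p = det2 B1 B3 * det2 C1 C3 * (A1 true * A3 true + A2 true * (A1 true * m * m' + A3 true * l * l'))).
  { unfold d11, ent, b2, det2; simpl; rewrite !H; unfold outer3; rewrite !Ha, !Hb; ring. }
  unfold G1; rewrite e0, e1; apply sgn_pos;
  repeat (apply Rplus_le_le_0_compat || apply Rmult_le_pos); auto.
Qed.

Lemma quad_nonpos A B C s t : A<=0 -> B<=0 -> C<=0 -> 0<=s -> 0<=t -> A*s*s + B*s*t + C*t*t <= 0.
Proof. intros. assert (0 <= s*s) by nra. assert (0<=s*t) by nra. assert (0<=t*t) by nra. nra. Qed.
Lemma quad_nonneg A B C s t : 0<=A -> 0<=B -> 0<=C -> 0<=s -> 0<=t -> 0 <= A*s*s + B*s*t + C*t*t.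
Proof. intros. assert (0 <= s*s) by nra. assert (0<=s*t) by nra. assert (0<=t*t) by nra. nra. Qed.

Lemma Dlem p A1 B1 C1 A2 B2 C2 A3 B3 C3 : Dec p A1 B1 C1 A2 B2 C2 A3 B3 C3 ->
  mid A1 A2 A3 -> mid B2 B1 B3 -> mid C1 C3 C2 ->
  nonneg2 A1 -> nonneg2 A3 -> nonneg2 B2 -> nonneg2 B3 -> G1 p \/ G2 p.
Proof.
  intros H [l [m [hl [hm Ha]]]] [l1 [m1 [hl1 [hm1 Hb]]]] [l2 [m2 [hl2 [hm2 Hc]]]] [? ?] [? ?] [? ?] [? ?].
  set (XX := l1*m2). set (YY := l*l2). set (ZZ := m*m1).
  destruct (Rle_lt_dec XX (YY+ZZ)).
  - left.
    assert (e0: d10 p = det2 B2 B3 * det2 C1 C2 * ((-(l*m1))*A1 false*A1 false + (XX-YY-ZZ)*A1 false*A3 false + (-(m*l2))*A3 false*A3 false)).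
    { unfold d10, ent, b2, det2, XX, YY, ZZ; simpl; rewrite !H; unfold outer3; rewrite !Ha, !Hb, !Hc; ring. }
    assert (e1: d11 p = det2 B2 B3 * det2 C1 C2 * ((-(l*m1))*A1 true*A1 true + (XX-YY-ZZ)*A1 true*A3 true + (-(m*l2))*A3 true*A3 true)).
    { unfold d11, ent, b2, det2, XX, YY, ZZ; simpl; rewrite !H; unfold outer3; rewrite !Ha, !Hb, !Hc; ring. }
    unfold G1; rewrite e0, e1; apply sgn_neg; apply quad_nonpos; auto; nra.
  - right.
    assert (e0: d20 p = det2 A1 A3 * det2 C1 C2 * ((l1*m)*B2 false*B2 false + (XX+ZZ-YY)*B2 false*B3 false + (m1*m2)*B3 false*B3 false)).
    { unfold d20, ent, b2, det2, XX, YY, ZZ; simpl; rewrite !H; unfold outer3; rewrite !Ha, !Hb, !Hc; ring. }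
    assert (e1: d21 p = det2 A1 A3 * det2 C1 C2 * ((l1*m)*B2 true*B2 true + (XX+ZZ-YY)*B2 true*B3 true + (m1*m2)*B3 true*B3 true)).
    { unfold d21, ent, b2, det2, XX, YY, ZZ; simpl; rewrite !H; unfold outer3; rewrite !Ha, !Hb, !Hc; ring. }
    unfold G2; rewrite e0, e1; apply sgn_pos; apply quad_nonneg; auto; try nra.
    all: assert (0 <= ZZ) by (unfold ZZ; nra); try lra.
Qed.
Lemma rel3 u v w cu cv cw : (forall x, cu*u x + cv*v x + cw*w x = 0) -> cv <> 0 ->
  cu*cv <= 0 -> cw*cv <= 0 -> mid u v w.
Proof.
  intros H hv h1 h2. exists (-cu/cv), (-cw/cv).
  assert (0 < cv*cv) by (destruct (Rtotal_order cv 0) as [?|[?|?]]; [nra|contradiction|nra]).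
  assert (E1: -cu/cv = -(cu*cv)/(cv*cv)) by (field; auto).
  assert (E2: -cw/cv = -(cw*cv)/(cv*cv)) by (field; auto).
  split; [rewrite E1|split; [rewrite E2|]].
  - apply Rmult_le_pos; [lra|left; apply Rinv_0_lt_compat; lra].
  - apply Rmult_le_pos; [lra|left; apply Rinv_0_lt_compat; lra].
  - intros x. specialize (H x). apply (Rmult_eq_reg_l cv); auto.
    field_simplify; auto. lra.
Qed.

Lemma signs cu cv cw : (cv<>0 /\ cu*cv<=0 /\ cw*cv<=0) \/ (cu<>0 /\ cv*cu <= 0 /\ cw*cu<=0)
  \/ (cw <> 0 /\ cu*cw<=0 /\ cv*cw<=0) \/ (0<=cu /\ 0<=cv /\ 0<=cw) \/ (cu<=0 /\ cv<=0 /\ cw<=0).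
Proof.
  destruct (Rtotal_order cu 0) as [?|[?|?]]; destruct (Rtotal_order cv 0) as [?|[?|?]];
  destruct (Rtotal_order cw 0) as [?|[?|?]];
  first [ solve [left; split; [intro; lra|split; nra]]
        | solve [right; left; split; [intro; lra|split; nra]]
        | solve [right; right; left; split; [intro; lra|split; nra]]
        | solve [right; right; right; left; repeat split; lra]
        | solve [right; right; right; right; repeat split; lra]].
Qed.

Lemma zero_mid u v w : u false = 0 -> u true = 0 -> mid v u w.
Proof. intros. exists 0, 0. split; [lra|split;[lra|]]. intros []; rewrite ?H, ?H0; ring. Qed.

Lemma kill c a b : c*a = 0 -> c*b = 0 -> (a<>0 \/ b<>0) -> c = 0.
Proof. intros H H0 [H1|H1]; [destruct (Rmult_integral _ _ H)|destruct (Rmult_integral _ _ H0)]; tauto. Qed.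

Lemma par u v w : nonneg2 u -> nonneg2 v -> (u false <> 0 \/ u true <> 0) -> det2 u v = 0 -> mid u v w.
Proof.
  intros [u0 u1] [v0 v1] hz hd. unfold det2 in hd.
  assert (hs: 0 < u false + u true) by (destruct hz; destruct u0, u1; try lra; subst; lra).
  exists ((v false + v true)/(u false + u true)), 0.
  split; [apply Rmult_le_pos; [lra|left; apply Rinv_0_lt_compat; lra]|split;[lra|]].
  intros x. apply (Rmult_eq_reg_l (u false + u true)); [|lra].
  destruct x; field_simplify; try lra; nra.
Qed.

Lemma zdec (u:bool->R) : (u false = 0 /\ u true = 0) \/ (u false <> 0 \/ u true <> 0).
Proof. destruct (Req_dec (u false) 0); destruct (Req_dec (u true) 0); tauto. Qed.

Lemma middle u v w : nonneg2 u -> nonneg2 v -> nonneg2 w ->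
  mid v u w \/ mid u v w \/ mid u w v.
Proof.
  intros hu hv hw. pose proof hu as [u0 u1]. pose proof hv as [v0 v1]. pose proof hw as [w0 w1].
  assert (rel: forall x, det2 v w * u x + (- det2 u w) * v x + det2 u v * w x = 0)
    by (intros []; unfold det2; ring).
  destruct (zdec u) as [[a0 a1]|nu]; [left; apply zero_mid; auto|].
  destruct (zdec v) as [[a0 a1]|nv]; [right; left; apply zero_mid; auto|].
  destruct (zdec w) as [[a0 a1]|nw]; [right; right; apply zero_mid; auto|].
  all: destruct (signs (det2 v w) (- det2 u w) (det2 u v)) as [h|[h|[h|[h|h]]]].
  all: try (right; left; destruct h as [? [? ?]];
            apply (rel3 u v w (det2 v w) (- det2 u w) (det2 u v)); auto; fail).
  all: try (left; destruct h as [? [? ?]];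
            apply (rel3 v u w (- det2 u w) (det2 v w) (det2 u v)); auto;
            intros x; rewrite <- (rel x); ring; fail).
  all: try (right; right; destruct h as [? [? ?]];
            apply (rel3 u w v (det2 v w) (det2 u v) (- det2 u w)); auto;
            intros x; rewrite <- (rel x); ring; fail).
  all: destruct h as [h1 [h2 h3]].
  all: assert (t: forall x, det2 v w * u x = 0 /\ - det2 u w * v x = 0 /\ det2 u v * w x = 0)
   by (intros x; pose proof (rel x); destruct x;
       first [ assert (0 <= det2 v w * u false) by nra; assert (0 <= - det2 u w * v false) by nra;
               assert (0 <= det2 u v * w false) by nra; repeat split; lra
             | assert (0 <= det2 v w * u true) by nra; assert (0 <= - det2 u w * v true) by nra;
               assert (0 <= det2 u v * w true) by nra; repeat split; lra
             | assert (det2 v w * u false <= 0) by nra; assert (- det2 u w * v false <= 0) by nra;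
               assert (det2 u v * w false <= 0) by nra; repeat split; lra
             | assert (det2 v w * u true <= 0) by nra; assert (- det2 u w * v true <= 0) by nra;
               assert (det2 u v * w true <= 0) by nra; repeat split; lra ]).
  all: right; left; apply par; auto.
  all: apply (kill _ (w false) (w true)); [apply (t false)|apply (t true)|auto].
Qed.

Lemma mid_sym u v w : mid u v w -> mid w v u.
Proof. intros [l [m [? [? H]]]]. exists m, l. split; auto. split; auto. intros x; rewrite H; ring. Qed.

Ltac reord H := intros i j k; rewrite H; ring.

Lemma Lfix p A1 B1 C1 A2 B2 C2 A3 B3 C3 : Dec p A1 B1 C1 A2 B2 C2 A3 B3 C3 ->
  nonneg2 A1 -> nonneg2 B1 -> nonneg2 C1 -> nonneg2 A2 -> nonneg2 B2 -> nonneg2 C2 ->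
  nonneg2 A3 -> nonneg2 B3 -> nonneg2 C3 ->
  mid A1 A2 A3 -> G1 p \/ G2 p \/ G3 p.
Proof.
  intros H ha1 hb1 hc1 ha2 hb2 hc2 ha3 hb3 hc3 Ha.
  destruct (middle B1 B2 B3) as [Hb|[Hb|Hb]]; auto;
  destruct (middle C1 C2 C3) as [Hc|[Hc|Hc]]; auto.
  - left. apply (E23 p A2 B2 C2 A1 B1 C1 A3 B3 C3); auto. reord H.
  - right; left. eapply E13; eauto.
  - destruct (Dlem p A1 B1 C1 A2 B2 C2 A3 B3 C3); auto.
  - right; right. eapply E12; eauto.
  - right; right. eapply E12; eauto.
  - right; right. eapply E12; eauto.
  - destruct (Dlem p A3 B3 C3 A2 B2 C2 A1 B1 C1); auto; try (apply mid_sym; auto).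
    reord H.
  - right; left. eapply E13; eauto.
  - left. apply (E23 p A1 B1 C1 A3 B3 C3 A2 B2 C2); auto. reord H.
Qed.

Lemma forward p A1 B1 C1 A2 B2 C2 A3 B3 C3 : Dec p A1 B1 C1 A2 B2 C2 A3 B3 C3 ->
  nonneg2 A1 -> nonneg2 B1 -> nonneg2 C1 -> nonneg2 A2 -> nonneg2 B2 -> nonneg2 C2 ->
  nonneg2 A3 -> nonneg2 B3 -> nonneg2 C3 -> G1 p \/ G2 p \/ G3 p.
Proof.
  intros H ha1 hb1 hc1 ha2 hb2 hc2 ha3 hb3 hc3.
  destruct (middle A1 A2 A3) as [Ha|[Ha|Ha]]; auto.
  - apply (Lfix p A2 B2 C2 A1 B1 C1 A3 B3 C3); auto. reord H.
  - apply (Lfix p A1 B1 C1 A2 B2 C2 A3 B3 C3); auto.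
  - apply (Lfix p A1 B1 C1 A3 B3 C3 A2 B2 C2); auto. reord H.
Qed.

Definition Dex (p : tensor3) : Prop :=
  exists a1 b1 c1 a2 b2' c2 a3 b3 c3 : bool -> R,
    nonneg2 a1 /\ nonneg2 b1 /\ nonneg2 c1 /\
    nonneg2 a2 /\ nonneg2 b2' /\ nonneg2 c2 /\
    nonneg2 a3 /\ nonneg2 b3 /\ nonneg2 c3 /\
    forall i j k, p i j k = outer3 a1 b1 c1 i j k + outer3 a2 b2' c2 i j k
                            + outer3 a3 b3 c3 i j k.

Lemma slice2 a b c d : 0<=a -> 0<=b -> 0<=c -> 0<=d -> 0 <= a*d - b*c ->
  exists e u0 u1 v0 v1, 0<=e /\ 0<=u0 /\ 0<=u1 /\ 0<=v0 /\ 0<=v1 /\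
    a = u0*v0 /\ b = u0*v1 /\ c = u1*v0 /\ d = e + u1*v1.
Proof.
  intros ha hb hc hd hdet. destruct (Rlt_le_dec 0 a).
  - exists ((a*d - b*c)/a), 1, (c/a), a, b.
    repeat split; try lra; try (apply Rmult_le_pos; [lra|left; apply Rinv_0_lt_compat; lra]); field; lra.
  - assert (a = 0) by lra. subst a.
    assert (b*c = 0) by nra. destruct (Rmult_integral _ _ H) as [->| ->].
    + exists 0, 0, 1, c, d. repeat split; lra.
    + exists 0, b, d, 0, 1. repeat split; lra.
Qed.

Lemma back1 p : (forall i j k, 0 <= p i j k) -> 0 <= d10 p -> 0 <= d11 p -> Dex p.
Proof.
  intros hp h0 h1. unfold d10, d11, ent, b2 in *; simpl in *.
  destruct (slice2 (p false false false) (p false false true) (p false true false) (p false true true))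
    as [eA [uA0 [uA1 [vA0 [vA1 [? [? [? [? [? [EA1 [EA2 [EA3 EA4]]]]]]]]]]]]]; auto.
  destruct (slice2 (p true false false) (p true false true) (p true true false) (p true true true))
    as [eB [uB0 [uB1 [vB0 [vB1 [? [? [? [? [? [EB1 [EB2 [EB3 EB4]]]]]]]]]]]]]; auto.
  exists (fun i : bool => if i then 0 else 1), (fun j : bool => if j then uA1 else uA0), (fun k : bool => if k then vA1 else vA0),
    (fun i : bool => if i then 1 else 0), (fun j : bool => if j then uB1 else uB0), (fun k : bool => if k then vB1 else vB0),
    (fun i : bool => if i then eB else eA), (fun j : bool => if j then 1 else 0), (fun k : bool => if k then 1 else 0).
  unfold nonneg2; repeat split; try lra.
  intros [] [] []; unfold outer3; simpl;
    first [rewrite EA1 | rewrite EA2 | rewrite EA3 | rewrite EA4 | rewrite EB1 | rewrite EB2 | rewrite EB3 | rewrite EB4]; ring.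
Qed.

Definition swap12 (p : tensor3) : tensor3 := fun i j k => p j i k.
Definition swap13 (p : tensor3) : tensor3 := fun i j k => p k j i.
Definition flipk (p : tensor3) : tensor3 := fun i j k => p i j (negb k).

Lemma tr12 p : Dex (swap12 p) -> Dex p.
Proof.
  intros (a1 & b1 & c1 & a2 & b2' & c2 & a3 & b3 & c3 & h1 & h2 & h3 & h4 & h5 & h6 & h7 & h8 & h9 & H).
  exists b1, a1, c1, b2', a2, c2, b3, a3, c3. unfold nonneg2 in *; repeat split; try tauto.
  intros i j k. specialize (H j i k). unfold swap12 in H. rewrite H. unfold outer3; ring.
Qed.
Lemma tr13 p : Dex (swap13 p) -> Dex p.
Proof.
  intros (a1 & b1 & c1 & a2 & b2' & c2 & a3 & b3 & c3 & h1 & h2 & h3 & h4 & h5 & h6 & h7 & h8 & h9 & H).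
  exists c1, b1, a1, c2, b2', a2, c3, b3, a3. unfold nonneg2 in *; repeat split; try tauto.
  intros i j k. specialize (H k j i). unfold swap13 in H. rewrite H. unfold outer3; ring.
Qed.
Lemma trf p : Dex (flipk p) -> Dex p.
Proof.
  intros (a1 & b1 & c1 & a2 & b2' & c2 & a3 & b3 & c3 & h1 & h2 & h3 & h4 & h5 & h6 & h7 & h8 & h9 & H).
  exists a1, b1, (fun k => c1 (negb k)), a2, b2', (fun k => c2 (negb k)), a3, b3, (fun k => c3 (negb k)).
  unfold nonneg2 in *; simpl; repeat split; try tauto.
  intros i j k. specialize (H i j (negb k)). unfold flipk in H. rewrite Bool.negb_involutive in H.
  rewrite H. unfold outer3; ring.
Qed.

Lemma d_swap12 p : d10 (swap12 p) = d20 p /\ d11 (swap12 p) = d21 p.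
Proof. unfold d10, d11, d20, d21, ent, swap12; split; ring. Qed.
Lemma d_swap13 p : d10 (swap13 p) = d30 p /\ d11 (swap13 p) = d31 p.
Proof. unfold d10, d11, d30, d31, ent, swap13; split; ring. Qed.
Lemma d_flip p : d10 (flipk p) = - d10 p /\ d11 (flipk p) = - d11 p.
Proof. unfold d10, d11, ent, flipk, b2; simpl; split; ring. Qed.

Lemma back_dir1 p : (forall i j k, 0 <= p i j k) -> G1 p -> Dex p.
Proof.
  intros hp [[h0 h1]|[h0 h1]].
  - apply back1; auto.
  - apply trf. destruct (d_flip p) as [e0 e1]. apply back1; [intros; apply hp|lra|lra].
Qed.

Theorem corollary3 (p : tensor3) (hp : in_simplex p) :
  M33 p <->
  exists i : nat, (1 <= i <= 3)%nat /\
    ((0 <= dslice i false p /\ 0 <= dslice i true p) \/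
     (dslice i false p <= 0 /\ dslice i true p <= 0)).
Proof.
  split.
  - intros [_ (a1 & b1 & c1 & a2 & b2' & c2 & a3 & b3 & c3 & h1 & h2 & h3 & h4 & h5 & h6 & h7 & h8 & h9 & H)].
    destruct (forward p a1 b1 c1 a2 b2' c2 a3 b3 c3) as [G|[G|G]]; auto.
    + exists 1%nat; split; [lia|exact G].
    + exists 2%nat; split; [lia|exact G].
    + exists 3%nat; split; [lia|exact G].
  - intros (i & hi & G). split; [exact hp|]. destruct hp as [hpos _].
    destruct i as [|[|[|[|i]]]]; try lia; simpl in G.
    + apply back_dir1; auto.
    + apply tr12. apply back_dir1; [intros; apply hpos|].
      destruct (d_swap12 p) as [e0 e1]. unfold G1; rewrite e0, e1; exact G.
    + apply tr13. apply back_dir1; [intros; apply hpos|].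
      destruct (d_swap13 p) as [e0 e1]. unfold G1; rewrite e0, e1; exact G.
Qed.
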